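(* Let $H$ be a complex Hilbert space, $\varphi,\psi:[0,1]\to\mathbb{R}$ continuous, and $A\in\mathbb{B}(H)$. Then: (1) if $\varphi\ne-\psi$ (i.e. $\varphi+\psi$ is not identically zero), then $\displaystyle\|\operatorname{Re}A\|\le\Big(\int_0^1|\varphi(t)+\psi(t)|\,dt\Big)^{-1}\int_0^1\omega_t(\varphi,\psi;A)\,dt$; (2) if $\varphi\ne\psi$, then $\displaystyle\|\operatorname{Im}A\|\le\Big(\int_0^1|\varphi(t)-\psi(t)|\,dt\Big)^{-1}\int_0^1\omega_t(\varphi,\psi;A)\,dt$; (3) if $|\varphi|\ne|\psi|$, then $\displaystyle\|A\|\le\Big[\Big(\int_0^1|\varphi(t)+\psi(t)|\,dt\Big)^{-1}+\Big(\int_0^1|\varphi(t)-\psi(t)|\,dt\Big)^{-1}\Big]\int_0^1\omega_t(\varphi,\psi;A)\,dt$.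
   Context: $\operatorname{Re}A=(A+A^* )/2$, $\operatorname{Im}A=(A-A^* )/(2i)$. $S_1(H)$ is the unit sphere of $H$ and $\omega_t(\varphi,\psi;A)=\sup_{x\in S_1(H)}|\langle(\varphi(t)A+\psi(t)A^* )x,x\rangle|$ for $t\in[0,1]$. *)

(* Defs.v *)
From HB Require Import structures.
From mathcomp Require Import all_boot all_order all_algebra.
From mathcomp Require Import all_classical all_reals all_analysis.
From mathcomp Require Import complex.
Set Implicit Arguments. Unset Strict Implicit. Unset Printing Implicit Defensive.
Import Order.TTheory GRing.Theory Num.Theory.
Import numFieldNormedType.Exports.
Local Open Scope ring_scope.
Local Open Scope classical_set_scope.

Section Hilbert.
Variables (R : realType) (H : lmodType R[i]) (ip : H -> H -> R[i]).

Definition hnorm (x : H) : R := Num.sqrt (complex.Re (ip x x)).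

Definition is_hilbert : Prop :=
  [/\ (forall (a : R[i]) (x y z : H), ip (a *: x + y) z = a * ip x z + ip y z),
      (forall x y : H, ip y x = conjc (ip x y)),
      (forall x : H, complex.Re (ip x x) >= 0 /\ complex.Im (ip x x) = 0),
      (forall x : H, ip x x = 0 -> x = 0) &
      (forall u : nat -> H,
          (forall e : R, 0 < e -> exists N : nat, forall m n : nat,
               (N <= m)%N -> (N <= n)%N -> hnorm (u m - u n) < e) ->
          exists l : H, forall e : R, 0 < e -> exists N : nat,
               forall n : nat, (N <= n)%N -> hnorm (u n - l) < e)].

Definition is_bounded_op (A : H -> H) : Prop :=
  (forall (a : R[i]) (x y : H), A (a *: x + y) = a *: A x + A y) /\
  exists M : R, forall x : H, hnorm (A x) <= M * hnorm x.

Definition is_adjoint (A Astar : H -> H) : Prop :=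
  forall x y : H, ip (A x) y = ip x (Astar y).

Definition unit_sphere : set H := [set x | hnorm x = 1].

Definition opnorm (T : H -> H) : R := sup [set hnorm (T x) | x in unit_sphere].

Definition ReOp (A Astar : H -> H) : H -> H :=
  fun x => (2%:R : R[i])^-1 *: (A x + Astar x).
Definition ImOp (A Astar : H -> H) : H -> H :=
  fun x => ((2%:R : R[i]) * 'i%C)^-1 *: (A x - Astar x).

Definition cmod (z : R[i]) : R := Num.sqrt (complex.Re z ^+ 2 + complex.Im z ^+ 2).

Definition omega_t (phi psi : R -> R) (A Astar : H -> H) (t : R) : R :=
  sup [set cmod (ip (((phi t)%:C)%C *: A x + ((psi t)%:C)%C *: Astar x) x)
      | x in unit_sphere].

End Hilbert.

Definition int01 (R : realType) (f : R -> R) : R :=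
  Rintegral (@lebesgue_measure R) `[(0:R), 1] f.

(* Main.v *)
Require Import Defs.
From HB Require Import structures.
From mathcomp Require Import all_boot all_order all_algebra.
From mathcomp Require Import all_classical all_reals all_analysis.
From mathcomp Require Import complex.
From mathcomp Require Import ring lra.
Import Order.TTheory GRing.Theory Num.Theory.
Import numFieldNormedType.Exports.
Local Open Scope ring_scope.
Local Open Scope classical_set_scope.
Set Implicit Arguments. Unset Strict Implicit.
Section IP.
Variables (R : realType) (H : lmodType R[i]) (ip : H -> H -> R[i]).
Hypothesis ipL : forall (a : R[i]) (x y z : H), ip (a *: x + y) z = a * ip x z + ip y z.
Hypothesis ipC : forall x y : H, ip y x = conjc (ip x y).

Lemma ip0l z : ip 0 z = 0.
Proof.
have h := ipL 1 0 0 z; rewrite scale1r addr0 mul1r in h.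
by apply: (addrI (ip 0 z)); rewrite addr0 -h.
Qed.
Lemma ipZl a x z : ip (a *: x) z = a * ip x z.
Proof. by have := ipL a x 0 z; rewrite addr0 ip0l addr0. Qed.
Lemma ipDl x y z : ip (x + y) z = ip x z + ip y z.
Proof. by have := ipL 1 x y z; rewrite scale1r mul1r. Qed.
Lemma ipNl x z : ip (- x) z = - ip x z.
Proof. by rewrite -scaleN1r ipZl mulN1r. Qed.
Lemma ipBl x y z : ip (x - y) z = ip x z - ip y z.
Proof. by rewrite ipDl ipNl. Qed.
Lemma conjcD (a b : R[i]) : conjc (a + b) = conjc a + conjc b.
Proof. by case: a => ? ?; case: b => ? ? /=; rewrite /conjc /= opprD. Qed.
Lemma conjcM (a b : R[i]) : conjc (a * b) = conjc a * conjc b.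
Proof. by case: a => a1 a2; case: b => b1 b2; rewrite /conjc /=; congr (Complex _ _); ring. Qed.
Lemma conjcN (a : R[i]) : conjc (- a) = - conjc a.
Proof. by case: a. Qed.
Lemma ipDr x y z : ip z (x + y) = ip z x + ip z y.
Proof. by rewrite ipC ipDl conjcD -!ipC. Qed.
Lemma ipZr a x z : ip z (a *: x) = conjc a * ip z x.
Proof. by rewrite ipC ipZl conjcM -ipC. Qed.
Lemma ipNr x z : ip z (- x) = - ip z x.
Proof. by rewrite ipC ipNl conjcN -ipC. Qed.
Lemma ipBr x y z : ip z (x - y) = ip z x - ip z y.
Proof. by rewrite ipDr ipNr. Qed.
Lemma ip0r z : ip z 0 = 0.
Proof. by rewrite ipC ip0l /conjc /= oppr0. Qed.

Definition N x := complex.Re (ip x x).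

Lemma N_sub x y : N (x - y) = N x + N y - 2 * complex.Re (ip x y).
Proof.
rewrite /N ipBl !ipBr (ipC x y).
move: (ip x x) (ip x y) (ip y y) => [a b] [c d] [e f] /=. lra.
Qed.
Lemma N_add x y : N (x + y) = N x + N y + 2 * complex.Re (ip x y).
Proof.
rewrite /N ipDl !ipDr (ipC x y).
move: (ip x x) (ip x y) (ip y y) => [a b] [c d] [e f] /=. lra.
Qed.
Lemma N_scale (c : R[i]) x : N (c *: x) = (complex.Re c ^+ 2 + complex.Im c ^+ 2) * N x.
Proof.
rewrite /N ipZl ipZr; case: c => a b; move: (ip x x) => [u v] /=. ring.
Qed.
End IP.
Section OP.
Variables (R : realType) (H : lmodType R[i]) (ip : H -> H -> R[i]).
Hypothesis ipL : forall (a : R[i]) (x y z : H), ip (a *: x + y) z = a * ip x z + ip y z.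
Hypothesis ipC : forall x y : H, ip y x = conjc (ip x y).
Hypothesis ipP : forall x : H, complex.Re (ip x x) >= 0 /\ complex.Im (ip x x) = 0.
Hypothesis ipD : forall x : H, ip x x = 0 -> x = 0.
Local Notation N := (N ip).

Lemma N_ge0 x : 0 <= N x. Proof. by case: (ipP x). Qed.
Lemma N_eq0 x : N x = 0 -> x = 0.
Proof.
move=> h; apply: ipD; case: (ipP x) => _; move: h; rewrite /N.
by case: (ip x x) => a b /= -> ->.
Qed.
Lemma hnormE x : hnorm ip x = Num.sqrt (N x). Proof. by []. Qed.
Lemma unitE x : hnorm ip x = 1 <-> N x = 1.
Proof.
rewrite hnormE; split => h; last by rewrite h sqrtr1.
by rewrite -(sqr_sqrtr (N_ge0 x)) h expr1n.
Qed.
Lemma Re_le u v : complex.Re (ip u v) <= (N u + N v) / 2.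
Proof. have := N_ge0 (u - v); rewrite (N_sub ipL ipC). lra. Qed.

Lemma scaling (Q : H -> R) K : Q 0 = 0 ->
  (forall (r : R) z, Q ((r%:C)%C *: z) = r ^+ 2 * Q z) ->
  (forall x, N x = 1 -> `|Q x| <= K) -> forall z, `|Q z| <= K * N z.
Proof.
move=> Q0 QZ hK z.
have [/N_eq0 ->|Nz0] := eqVneq (N z) 0.
  by rewrite Q0 normr0 (_ : N 0 = 0) ?mulr0 // /N (ip0l ipL).
have Nzp : 0 < N z by rewrite lt_def Nz0 N_ge0.
set r := Num.sqrt (N z).
have rp : 0 < r by rewrite sqrtr_gt0.
have r2 : r ^+ 2 = N z by rewrite sqr_sqrtr // N_ge0.
have Nu : N ((r^-1)%:C%C *: z) = 1.
  rewrite (N_scale ipL ipC) /= expr0n /= addr0 -r2 exprVn mulVf //.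
  by rewrite expf_neq0 // gt_eqF.
have := hK _ Nu; rewrite QZ normrM.
rewrite ger0_norm ?sqr_ge0 // exprVn r2 => h.
have e : `|Q z| = ((N z)^-1 * `|Q z|) * N z by rewrite mulrAC mulVf // mul1r.
by rewrite e; apply: ler_wpM2r h; apply: N_ge0.
Qed.
End OP.
Section OP2.
Variables (R : realType) (H : lmodType R[i]) (ip : H -> H -> R[i]).
Hypothesis ipL : forall (a : R[i]) (x y z : H), ip (a *: x + y) z = a * ip x z + ip y z.
Hypothesis ipC : forall x y : H, ip y x = conjc (ip x y).
Hypothesis ipP : forall x : H, complex.Re (ip x x) >= 0 /\ complex.Im (ip x x) = 0.
Hypothesis ipD : forall x : H, ip x x = 0 -> x = 0.
Local Notation N := (N ip).

Lemma attain (T : H -> H) x K : N x = 1 ->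
  (forall y, N y = 1 -> complex.Re (ip (T x) y) <= K) -> hnorm ip (T x) <= K.
Proof.
move=> Nx hK.
have [/(N_eq0 ipP ipD) T0|Nz0] := eqVneq (N (T x)) 0.
  have := hK x Nx; rewrite T0 (ip0l ipL) /= => K0.
  by rewrite /hnorm -/(N 0) /N (ip0l ipL) /= sqrtr0.
have Nzp : 0 < N (T x) by rewrite lt_def Nz0 (N_ge0 ipP).
set s := Num.sqrt (N (T x)).
have sp : 0 < s by rewrite sqrtr_gt0.
have s2 : s ^+ 2 = N (T x) by rewrite sqr_sqrtr // (N_ge0 ipP).
have Nu : N ((s^-1)%:C%C *: T x) = 1.
  rewrite (N_scale ipL ipC) /= expr0n /= addr0 -s2 exprVn mulVf //.
  by rewrite expf_neq0 // gt_eqF.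
have := hK _ Nu; rewrite (ipZr ipL ipC) -/(N (T x)).
have -> : complex.Re (((s^-1)%:C)^* * ip (T x) (T x))%C = s^-1 * N (T x).
  by rewrite /N; case: (ip (T x) (T x)) => a b /=; ring.
by rewrite -s2 expr2 mulKf ?gt_eqF.
Qed.

Lemma opnorm_le (T : H -> H) K : (exists x, N x = 1) ->
  (forall x, N x = 1 -> hnorm ip (T x) <= K) -> opnorm ip T <= K.
Proof.
move=> [x0 h0] hK; apply: ge_sup.
  by exists (hnorm ip (T x0)); exists x0 => //; rewrite /unit_sphere /= (unitE ipP).
by move=> _ [x xu <-]; apply: hK; rewrite -(unitE ipP).
Qed.

Variables (A : H -> H).
Hypothesis Alin : forall (a : R[i]) (x y : H), A (a *: x + y) = a *: A x + A y.
Lemma A0 : A 0 = 0.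
Proof.
have h := Alin 1 0 0; rewrite scale1r addr0 scale1r in h.
by apply: (addrI (A 0)); rewrite addr0 -h.
Qed.
Lemma AZ a x : A (a *: x) = a *: A x.
Proof. by have := Alin a x 0; rewrite addr0 A0 addr0. Qed.
Lemma AD x y : A (x + y) = A x + A y.
Proof. by have := Alin 1 x y; rewrite !scale1r. Qed.
Lemma AN x : A (- x) = - A x.
Proof. by rewrite -scaleN1r AZ scaleN1r. Qed.
Lemma AB x y : A (x - y) = A x - A y.
Proof. by rewrite AD AN. Qed.

Definition qf x := complex.Re (ip (A x) x).
Definition pf x := complex.Im (ip (A x) x).

Lemma polar_q x y : qf (x + y) - qf (x - y) =
  2 * (complex.Re (ip (A x) y) + complex.Re (ip (A y) x)).
Proof.
rewrite /qf AD AB (ipBl ipL) (ipDl ipL) !(ipBr ipL ipC) !(ipDr ipL ipC).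
move: (ip (A x) x) (ip (A x) y) (ip (A y) x) (ip (A y) y) => [a b] [c d] [e f] [g h] /=. lra.
Qed.
Lemma polar_p x y : pf (x + y) - pf (x - y) =
  2 * (complex.Im (ip (A x) y) + complex.Im (ip (A y) x)).
Proof.
rewrite /pf AD AB (ipBl ipL) (ipDl ipL) !(ipBr ipL ipC) !(ipDr ipL ipC).
move: (ip (A x) x) (ip (A x) y) (ip (A y) x) (ip (A y) y) => [a b] [c d] [e f] [g h] /=. lra.
Qed.

Lemma qf_scale r z : qf ((r%:C)%C *: z) = r ^+ 2 * qf z.
Proof.
rewrite /qf AZ (ipZl ipL) (ipZr ipL ipC); case: (ip (A z) z) => a b /=; ring.
Qed.
Lemma pf_scale r z : pf ((r%:C)%C *: z) = r ^+ 2 * pf z.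
Proof.
rewrite /pf AZ (ipZl ipL) (ipZr ipL ipC); case: (ip (A z) z) => a b /=; ring.
Qed.
Lemma qf0 : qf 0 = 0. Proof. by rewrite /qf A0 (ip0l ipL). Qed.
Lemma pf0 : pf 0 = 0. Proof. by rewrite /pf A0 (ip0l ipL). Qed.

Lemma par x y : N (x + y) + N (x - y) = 2 * N x + 2 * N y.
Proof. rewrite (N_add ipL ipC) (N_sub ipL ipC); lra. Qed.

Lemma nr_q K : (forall x, N x = 1 -> `|qf x| <= K) -> forall x y, N x = 1 -> N y = 1 ->
  `|complex.Re (ip (A x) y) + complex.Re (ip (A y) x)| <= 2 * K.
Proof.
move=> hK x y Nx Ny.
have hs := scaling ipL ipC ipP ipD qf0 qf_scale hK.
have h1 := hs (x + y); have h2 := hs (x - y); have hp := par x y.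
have hpol := polar_q x y.
move: h1 h2; rewrite Nx Ny in hp.
move: (qf (x+y)) (qf (x-y)) hpol => a b hpol.
rewrite !ler_norml => /andP[h1 h1'] /andP[h2 h2']; apply/andP; split; nra.
Qed.
Lemma nr_p K : (forall x, N x = 1 -> `|pf x| <= K) -> forall x y, N x = 1 -> N y = 1 ->
  `|complex.Im (ip (A x) y) + complex.Im (ip (A y) x)| <= 2 * K.
Proof.
move=> hK x y Nx Ny.
have hs := scaling ipL ipC ipP ipD pf0 pf_scale hK.
have h1 := hs (x + y); have h2 := hs (x - y); have hp := par x y.
have hpol := polar_p x y.
move: h1 h2; rewrite Nx Ny in hp.
move: (pf (x+y)) (pf (x-y)) hpol => a b hpol.
rewrite !ler_norml => /andP[h1 h1'] /andP[h2 h2']; apply/andP; split; nra.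
Qed.
End OP2.
Section Sq.
Variable R : realType.
Lemma sq_lip (X Y X' Y' : R) :
  Num.sqrt (X ^+ 2 + Y ^+ 2) <= Num.sqrt (X' ^+ 2 + Y' ^+ 2) + (`|X - X'| + `|Y - Y'|).
Proof.
have h := @le_normcD R (Complex X' Y') (Complex (X - X') (Y - Y')).
have e : (Complex X' Y' + Complex (X-X') (Y-Y') : Rcomplex R) = Complex X Y.
  change (Complex (X' + (X - X')) (Y' + (Y - Y')) = Complex X Y).
  by rewrite !(addrC X') !(addrC Y') !subrK.
rewrite e in h.
have h' : (Num.sqrt (X ^+ 2 + Y ^+ 2) <= Num.sqrt (X' ^+ 2 + Y' ^+ 2) + Num.sqrt ((X - X') ^+ 2 + (Y - Y') ^+ 2))%R := h. clear h; move: h' => h.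
apply: (le_trans h); rewrite lerD2l.
have hu := normr_ge0 (X - X'); have hv := normr_ge0 (Y - Y').
have -> : `|X - X'| + `|Y - Y'| = Num.sqrt ((`|X - X'| + `|Y - Y'|) ^+ 2).
  by rewrite sqrtr_sqr (ger0_norm (addr_ge0 hu hv)).
rewrite ler_sqrt ?addr_ge0 ?sqr_ge0 //.
rewrite -(real_normK (num_real (X - X'))) -(real_normK (num_real (Y - Y'))).
rewrite [in X in _ <= X]sqrrD lerD2r lerDl mulrn_wge0 // mulr_ge0 //.
Qed.
Lemma sq_ge (X Y : R) : `|X| <= Num.sqrt (X ^+ 2 + Y ^+ 2).
Proof. by rewrite -sqrtr_sqr ler_sqrt ?addr_ge0 ?sqr_ge0 // lerDl sqr_ge0. Qed.
Lemma sq_ge2 (X Y : R) : `|Y| <= Num.sqrt (X ^+ 2 + Y ^+ 2).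
Proof. by rewrite addrC sq_ge. Qed.
Lemma sq_le (X Y : R) : Num.sqrt (X ^+ 2 + Y ^+ 2) <= `|X| + `|Y|.
Proof. by have := sq_lip X Y 0 0; rewrite !subr0 expr0n /= addr0 sqrtr0 add0r. Qed.
End Sq.
Section Inv.
Variable R : realType.
Lemma two_C : (2%:R : R[i]) = Complex 2 0.
Proof. by rewrite -[LHS]/((1 + 1 : R[i])) /=; congr Complex; rewrite ?addr0 //. Qed.
Lemma inv2C : (2%:R : R[i])^-1 = Complex (2^-1) 0.
Proof.
have nz : (2%:R : R[i]) != 0 by rewrite pnatr_eq0.
apply: (mulfI nz); rewrite mulfV // two_C /=; congr Complex; field. all: by [].
Qed.
Lemma invi2C : ((2%:R : R[i]) * 'i%C)^-1 = Complex 0 (- 2^-1).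
Proof.
have nz : ((2%:R : R[i]) * 'i%C) != 0.
  rewrite mulf_eq0 negb_or pnatr_eq0 /=; apply/eqP => -[] /eqP; by rewrite oner_eq0.
apply: (mulfI nz); rewrite mulfV // two_C /=; congr Complex; field. all: by [].
Qed.
End Inv.
Section ADJ.
Variables (R : realType) (H : lmodType R[i]) (ip : H -> H -> R[i]).
Hypothesis ipL : forall (a : R[i]) (x y z : H), ip (a *: x + y) z = a * ip x z + ip y z.
Hypothesis ipC : forall x y : H, ip y x = conjc (ip x y).
Hypothesis ipP : forall x : H, complex.Re (ip x x) >= 0 /\ complex.Im (ip x x) = 0.
Hypothesis ipD : forall x : H, ip x x = 0 -> x = 0.
Variables (A Astar : H -> H).
Hypothesis Alin : forall (a : R[i]) (x y : H), A (a *: x + y) = a *: A x + A y.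
Hypothesis adj : forall x y : H, ip (A x) y = ip x (Astar y).
Local Notation N := (N ip).

Lemma ipAstar x y : ip (Astar x) y = conjc (ip (A y) x).
Proof. by rewrite ipC adj. Qed.

Lemma ReOp_ip x y : complex.Re (ip (ReOp A Astar x) y) =
  (complex.Re (ip (A x) y) + complex.Re (ip (A y) x)) / 2.
Proof.
rewrite /ReOp (ipZl ipL) (ipDl ipL) ipAstar inv2C.
move: (ip (A x) y) (ip (A y) x) => [a b] [c d] /=; field; rewrite ?pnatr_eq0 //.
Qed.
Lemma ImOp_ip x y : complex.Re (ip (ImOp A Astar x) y) =
  (complex.Im (ip (A x) y) + complex.Im (ip (A y) x)) / 2.
Proof.
rewrite /ImOp (ipZl ipL) (ipBl ipL) ipAstar invi2C.
move: (ip (A x) y) (ip (A y) x) => [a b] [c d] /=; field; rewrite ?pnatr_eq0 //.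
Qed.

Lemma omega_elem (a b : R) x :
  ip (((a%:C)%C) *: A x + ((b%:C)%C) *: Astar x) x =
  Complex ((a + b) * complex.Re (ip (A x) x)) ((a - b) * complex.Im (ip (A x) x)).
Proof.
rewrite (ipDl ipL) !(ipZl ipL) ipAstar.
move: (ip (A x) x) => [u v] /=; congr Complex; ring.
Qed.

Lemma re_sum x y : complex.Re (ip (A x) y) =
  (complex.Re (ip (A x) y) + complex.Re (ip (A y) x)) / 2
  - (complex.Im (ip (A x) ('i%C *: y)) + complex.Im (ip (A ('i%C *: y)) x)) / 2.
Proof.
rewrite (AZ Alin) (ipZl ipL) (ipZr ipL ipC).
move: (ip (A x) y) (ip (A y) x) => [a b] [c d] /=; field; rewrite ?pnatr_eq0 //.
Qed.

Lemma N_i y : N ('i%C *: y) = N y.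
Proof. by rewrite (N_scale ipL ipC) /= expr0n expr1n /= add0r mul1r. Qed.

Lemma w_bound M x : (forall z, hnorm ip (A z) <= M * hnorm ip z) -> N x = 1 ->
  `|complex.Re (ip (A x) x)| <= (M ^+ 2 + 1) / 2 /\
  `|complex.Im (ip (A x) x)| <= (M ^+ 2 + 1) / 2.
Proof.
move=> hM Nx.
have hx : hnorm ip x = 1 by apply/(unitE ipP).
have := hM x; rewrite hx mulr1 => hAx.
have M0 : 0 <= M by apply: le_trans hAx; apply: sqrtr_ge0.
have NAx : N (A x) <= M ^+ 2.
  rewrite -(sqr_sqrtr (N_ge0 ipP (A x))); apply: lerXn2r => //;
    rewrite ?nnegrE ?sqrtr_ge0 //.
have key : forall c : R[i], complex.Re c ^+ 2 + complex.Im c ^+ 2 = 1 ->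
    complex.Re (c * ip (A x) x) <= (M ^+ 2 + 1) / 2.
  move=> c hc; rewrite -(ipZl ipL); apply: le_trans (Re_le ipL ipC ipP _ _) _.
  rewrite (N_scale ipL ipC) hc mul1r Nx; lra.
have k1 := key 1 ltac:(simpl; ring).
have k2 := key (-1) ltac:(simpl; ring).
have k3 := key 'i%C ltac:(simpl; ring).
have k4 := key (- 'i%C) ltac:(simpl; ring).
move: k1 k2 k3 k4; move: (ip (A x) x) => [u v] /=.
rewrite !ler_norml; move=> k1 k2 k3 k4; split; apply/andP; split; lra.
Qed.
End ADJ.
Section Pos.
Variable R : realType.
Lemma near_pos (f : R -> R) t0 c : {within `[(0:R), 1], continuous f} ->
  t0 \in `[(0:R), 1] -> c < f t0 ->
  exists e : R, 0 < e /\ forall t, `|t0 - t| < e -> t \in `[(0:R), 1] -> c < f t.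
Proof.
move=> cf t0in ct0.
have := cf t0.
have A0 : `[(0:R), 1] t0 by rewrite /= -inE.
move=> /(cvgr_gt (f t0)) /(_ c ct0).
move=> h.
have h' : within `[(0:R), 1] (nbhs t0) (fun t => c < f t) by rewrite nbhs_subspace_in.
move: h' => /nbhs_ballP [e /= e0 he]; exists e; split => // t dt tin.
by apply: he; [rewrite /ball /=|rewrite /= -inE].
Qed.
End Pos.
Section Pos2.
Variable R : realType.
Local Notation mu := (@lebesgue_measure R).
Lemma cint (f : R -> R) a b : {within `[a, b], continuous f} ->
  mu.-integrable `[a, b] (EFin \o f).
Proof. by move=> cf; apply: continuous_compact_integrable => //; apply: segment_compact. Qed.

Lemma int01_pos_ab (f : R -> R) (a b c : R) : {within `[(0:R), 1], continuous f} ->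
  (forall t, 0 <= f t) -> 0 <= a -> a < b -> b <= 1 -> 0 < c ->
  (forall t, a <= t <= b -> c <= f t) -> 0 < int01 f.
Proof.
move=> cf f0 a0 ab b1 c0 hc.
have intf := cint cf.
have AB : `[a, b] `<=` `[(0:R), 1].
  move=> t; rewrite /= !in_itv /= => /andP[h1 h2].
  by apply/andP; split; [apply: le_trans h1|apply: le_trans b1].
rewrite /int01 -(setDUK AB) Rintegral_setU //; last 3 first.
- by apply: measurableD.
- by rewrite setDUK.
- by rewrite disj_set2E setDIK.
apply: (@lt_le_trans _ _ (c * (b - a))); first by rewrite mulr_gt0 // subr_gt0.
rewrite -[c * (b - a)]addr0; apply: lerD; last by apply: Rintegral_ge0.
have -> : c * (b - a) = Rintegral mu `[a, b] (fun _ => c).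
  rewrite Rintegral_cst //; congr (_ * _).
  have := @lebesgue_measure_itv R `[a, b]%R; rewrite /= lte_fin ab -EFinD => h.
  by have -> : mu `[a, b] = (b - a)%:E by apply: h.
apply: le_Rintegral => //.
- by apply: cint; apply: cst_continuous.
- by apply: integrableS intf.
Qed.
End Pos2.
Section Pos3.
Variable R : realType.
Lemma int01_pos (f : R -> R) t0 : {within `[(0:R), 1], continuous f} ->
  (forall t, 0 <= f t) -> t0 \in `[(0:R), 1] -> 0 < f t0 -> 0 < int01 f.
Proof.
move=> cf f0 t0in ft0.
have hlt : f t0 / 2 < f t0 by lra.
have [e [e0 he]] := near_pos cf t0in hlt.
move: (t0in); rewrite in_setE /= in_itv /= => /andP[t00 t01].
set d := Num.min (e / 2) (1 / 2).
have hd1 : d <= e / 2 by rewrite ge_min lexx.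
have hd2 : d <= 1 / 2 by rewrite ge_min lexx orbT.
have hd0 : 0 < d by rewrite lt_min; apply/andP; split; lra.
have hin : forall t, 0 <= t <= 1 -> `|t0 - t| <= d -> f t0 / 2 <= f t.
  move=> t /andP[h1 h2] h3; apply: ltW; apply: he.
    by apply: le_lt_trans h3 _; lra.
  by rewrite in_setE /= in_itv /=; apply/andP.
case: (lerP t0 (1 / 2)) => ht.
- apply: (@int01_pos_ab _ f t0 (t0 + d) (f t0 / 2)) => //; try lra.
  move=> t /andP[h1 h2]; apply: hin; first by apply/andP; lra.
  by rewrite ler_norml; apply/andP; lra.
- apply: (@int01_pos_ab _ f (t0 - d) t0 (f t0 / 2)) => //; try lra.
  move=> t /andP[h1 h2]; apply: hin; first by apply/andP; lra.
  by rewrite ler_norml; apply/andP; lra.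
Qed.
End Pos3.
Section Om.
Variables (R : realType) (T : Type) (U : set T) (a b : T -> R) (C : R).
Hypothesis C0 : 0 <= C.
Hypothesis hab : forall x, U x -> `|a x| <= C /\ `|b x| <= C.
Definition OmS (al be : R) := [set Num.sqrt ((al * a x) ^+ 2 + (be * b x) ^+ 2) | x in U].
Definition Om (al be : R) := sup (OmS al be).

Lemma Om_ub al be : has_ubound (OmS al be).
Proof.
exists ((`|al| + `|be|) * C) => _ [x Ux <-].
apply: le_trans (sq_le _ _) _; rewrite !normrM mulrDl.
by case: (hab Ux) => h1 h2; apply: lerD; apply: ler_wpM2l.
Qed.

Lemma Om_ge al be x : U x -> `|al * a x| <= Om al be /\ `|be * b x| <= Om al be.
Proof.
move=> Ux; have h : OmS al be (Num.sqrt ((al * a x) ^+ 2 + (be * b x) ^+ 2)) by exists x.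
have h' := ub_le_sup (Om_ub al be) h.
by split; [apply: le_trans (sq_ge _ _) h'|apply: le_trans (sq_ge2 _ _) h'].
Qed.

Lemma Om_ge0 al be : 0 <= Om al be.
Proof.
case: (pselect (exists x, U x)) => [[x Ux]|nU].
  by have [h _] := Om_ge al be Ux; apply: le_trans h.
rewrite /Om; have -> : OmS al be = set0.
  by apply/seteqP; split => // y [x Ux _]; apply: nU; exists x.
by rewrite /Om sup0.
Qed.

Lemma Om_lip al be al' be' : Om al be <= Om al' be' + (`|al - al'| + `|be - be'|) * C.
Proof.
case: (pselect (exists x, U x)) => [[x0 Ux0]|nU]; last first.
  rewrite [Om al be]/Om; have -> : OmS al be = set0.
    by apply/seteqP; split => // y [x Ux _]; apply: nU; exists x.
  rewrite sup0; apply: addr_ge0; first exact: Om_ge0.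
  by apply: mulr_ge0 => //; apply: addr_ge0.
apply: ge_sup; first by exists (Num.sqrt ((al * a x0) ^+ 2 + (be * b x0) ^+ 2)), x0.
move=> _ [x Ux <-].
apply: le_trans (sq_lip _ _ (al' * a x) (be' * b x)) _.
apply: lerD.
  have h : OmS al' be' (Num.sqrt ((al' * a x) ^+ 2 + (be' * b x) ^+ 2)) by exists x.
  by have := ub_le_sup (Om_ub al' be') h.
have -> : al * a x - al' * a x = (al - al') * a x by ring.
have -> : be * b x - be' * b x = (be - be') * b x by ring.
rewrite !normrM mulrDl.
by case: (hab Ux) => h1 h2; apply: lerD; apply: ler_wpM2l.
Qed.

Lemma Om_cont (A : set R) (g1 g2 : R -> R) :
  {within A, continuous g1} -> {within A, continuous g2} ->
  {within A, continuous (fun t => Om (g1 t) (g2 t))}.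
Proof.
move=> c1 c2 s.
set L := fun t => (`|g1 t - g1 s| + `|g2 t - g2 s|) * C.
have L0 : (L : subspace A -> R) @ nbhs (s : subspace A) --> (0 : R).
  have -> : (0 : R) = (`|g1 s - g1 s| + `|g2 s - g2 s|) * C.
    by rewrite !subrr normr0 addr0 mul0r.
  apply: cvgMl; apply: cvgD; apply: cvg_norm; apply: cvgB; try exact: cvg_cst.
  exact: c1. exact: c2.
apply: (squeeze_cvgr (f := fun t => Om (g1 s) (g2 s) - L t) (h := fun t => Om (g1 s) (g2 s) + L t)).
- exact: nbhs_subspace_filter.
- apply: (@filterE _ _ (nbhs_subspace_filter s)) => t; apply/andP; split.
  + have := Om_lip (g1 s) (g2 s) (g1 t) (g2 t); rewrite /L (distrC (g1 s)) (distrC (g2 s)).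
    rewrite /from_subspace /=; lra.
  + have := Om_lip (g1 t) (g2 t) (g1 s) (g2 s); rewrite /L /from_subspace /=; lra.
- have := cvgB (cvg_cst (Om (g1 s) (g2 s))) L0; rewrite subr0; exact.
- have := cvgD (cvg_cst (Om (g1 s) (g2 s))) L0; rewrite addr0; exact.
Qed.
End Om.
Section Final.
Variable R : realType.

Lemma int01_abs_pos (g : R -> R) : {within `[(0:R), 1], continuous g} ->
  (exists2 t, t \in `[(0:R), 1] & g t != 0) -> 0 < int01 (fun t => `|g t|).
Proof.
move=> cg [t tin gt]; apply: (int01_pos (t0 := t)) => //.
- by move=> s; apply: cvg_norm; exact: cg s.
- by rewrite normr_gt0.
Qed.

Lemma int_bound (g om : R -> R) (c : R) :
  {within `[(0:R), 1], continuous g} -> {within `[(0:R), 1], continuous om} ->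
  0 < int01 (fun t => `|g t|) ->
  (forall t, `|g t| * c <= om t) -> c <= (int01 (fun t => `|g t|))^-1 * int01 om.
Proof.
move=> cg com I0 h.
have cag : {within `[(0:R), 1], continuous (fun t => `|g t|)}.
  by move=> s; apply: cvg_norm; exact: cg s.
have : int01 (fun t => `|g t| * c) <= int01 om.
  apply: le_Rintegral => //.
  - apply: cint => s; apply: cvgMl; exact: cag s.
  - exact: cint.
rewrite /int01 RintegralZr //; last exact: cint.
by move=> hI; rewrite mulrC ler_pdivlMr // mulrC.
Qed.
End Final.
Section OPN.
Variables (R : realType) (H : lmodType R[i]) (ip : H -> H -> R[i]).
Hypothesis ipP : forall x : H, complex.Re (ip x x) >= 0 /\ complex.Im (ip x x) = 0.
Lemma opnorm_le' (T : H -> H) K : 0 <= K ->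
  (forall x, N ip x = 1 -> hnorm ip (T x) <= K) -> opnorm ip T <= K.
Proof.
move=> K0 hK.
case: (pselect (exists x, N ip x = 1)) => [[x0 h0]|nex].
  apply: ge_sup.
    by exists (hnorm ip (T x0)); exists x0 => //; rewrite /unit_sphere /= (unitE ipP).
  by move=> _ [x xu <-]; apply: hK; rewrite -(unitE ipP).
rewrite /opnorm; have -> : [set hnorm ip (T x) | x in unit_sphere ip] = set0.
  apply/seteqP; split => // y [x ux _]; apply: nex; exists x.
  by apply/(unitE ipP).
by rewrite sup0.
Qed.
End OPN.

Unset Implicit Arguments. Set Strict Implicit.

Theorem proposition2p9 (R : realType) (H : lmodType R[i]) (ip : H -> H -> R[i])
  (phi psi : R -> R) (A Astar : H -> H) :
  is_hilbert ip ->
  {within `[(0:R), 1]%classic, continuous phi} ->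
  {within `[(0:R), 1]%classic, continuous psi} ->
  is_bounded_op ip A ->
  is_adjoint ip A Astar ->
  [/\ (exists2 t, t \in `[(0:R), 1] & phi t + psi t != 0) ->
        opnorm ip (ReOp A Astar)
        <= (int01 (fun t => `|phi t + psi t|))^-1
           * int01 (omega_t ip phi psi A Astar),
      (exists2 t, t \in `[(0:R), 1] & phi t != psi t) ->
        opnorm ip (ImOp A Astar)
        <= (int01 (fun t => `|phi t - psi t|))^-1
           * int01 (omega_t ip phi psi A Astar) &
      (exists2 t, t \in `[(0:R), 1] & `|phi t| != `|psi t|) ->
        opnorm ip A
        <= ((int01 (fun t => `|phi t + psi t|))^-1
            + (int01 (fun t => `|phi t - psi t|))^-1)
           * int01 (omega_t ip phi psi A Astar)].
Proof.
move=> [ipL ipC ipP ipD _] cphi cpsi [Alin [M hM]] adj.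
set C := (M ^+ 2 + 1) / 2.
have C0 : 0 <= C.
  by rewrite /C; apply: divr_ge0 => //; apply: addr_ge0 => //; apply: sqr_ge0.
set U := unit_sphere ip.
set a := fun x => complex.Re (ip (A x) x).
set b := fun x => complex.Im (ip (A x) x).
have hab : forall x, U x -> `|a x| <= C /\ `|b x| <= C.
  move=> x Ux; apply: (w_bound ipL ipC ipP hM).
  by apply/(unitE ipP).
have omE : forall t, omega_t ip phi psi A Astar t
    = Om U a b (phi t + psi t) (phi t - psi t).
  move=> t; rewrite /omega_t /Om /OmS; congr sup; apply: eq_imagel => x _.
  by rewrite (omega_elem ipL ipC adj).
have cg1 : {within `[(0:R), 1], continuous (fun t => phi t + psi t)}.
  exact: within_continuousD cphi cpsi.
have cg2 : {within `[(0:R), 1], continuous (fun t => phi t - psi t)}.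
  exact: within_continuousB cphi cpsi.
have com : {within `[(0:R), 1], continuous (omega_t ip phi psi A Astar)}.
  have -> : omega_t ip phi psi A Astar
      = fun t => Om U a b (phi t + psi t) (phi t - psi t).
    by apply: funext => t; apply: omE.
  have HH := Om_cont C0 hab cg1 cg2; move=> s; exact (HH s).
have J0 : 0 <= int01 (omega_t ip phi psi A Astar).
  apply: Rintegral_ge0 => t _; have := Om_ge0 hab (phi t + psi t) (phi t - psi t); rewrite -omE; exact.
set J := int01 (omega_t ip phi psi A Astar).
have hq : 0 < int01 (fun t => `|phi t + psi t|) -> forall x, N ip x = 1 ->
    `|qf ip A x| <= (int01 (fun t => `|phi t + psi t|))^-1 * J.
  move=> I0 x Nx; apply: int_bound cg1 com I0 _ => t.
  have Ux : U x by apply/(unitE ipP).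
  rewrite omE; have [h _] := Om_ge hab (phi t + psi t) (phi t - psi t) Ux.
  by rewrite normrM in h.
have hp : 0 < int01 (fun t => `|phi t - psi t|) -> forall x, N ip x = 1 ->
    `|pf ip A x| <= (int01 (fun t => `|phi t - psi t|))^-1 * J.
  move=> I0 x Nx; apply: int_bound cg2 com I0 _ => t.
  have Ux : U x by apply/(unitE ipP).
  rewrite omE; have [_ h] := Om_ge hab (phi t + psi t) (phi t - psi t) Ux.
  by rewrite normrM in h.
split.
- move=> ex1; have I0 := int01_abs_pos cg1 ex1.
  apply: (opnorm_le' ipP).
    by apply: mulr_ge0 => //; rewrite invr_ge0 ltW.
  move=> x Nx; apply: (attain ipL ipC ipP ipD) => // y Ny.
  rewrite (ReOp_ip ipL ipC adj).
  have := nr_q ipL ipC ipP ipD Alin (hq I0) Nx Ny.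
  rewrite ler_norml => /andP[_ h]; lra.
- move=> [t tin ht].
  have ex2 : exists2 t, t \in `[(0:R), 1] & phi t - psi t != 0.
    by exists t => //; rewrite subr_eq0.
  have I0 := int01_abs_pos cg2 ex2.
  apply: (opnorm_le' ipP).
    by apply: mulr_ge0 => //; rewrite invr_ge0 ltW.
  move=> x Nx; apply: (attain ipL ipC ipP ipD) => // y Ny.
  rewrite (ImOp_ip ipL ipC adj).
  have := nr_p ipL ipC ipP ipD Alin (hp I0) Nx Ny.
  rewrite ler_norml => /andP[_ h]; lra.
- move=> [t tin ht].
  have ex1 : exists2 t, t \in `[(0:R), 1] & phi t + psi t != 0.
    exists t => //; apply: contra ht; rewrite addr_eq0 => /eqP ->.
    by rewrite normrN.
  have ex2 : exists2 t, t \in `[(0:R), 1] & phi t - psi t != 0.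
    by exists t => //; apply: contra ht; rewrite subr_eq0 => /eqP ->.
  have I1 := int01_abs_pos cg1 ex1; have I2 := int01_abs_pos cg2 ex2.
  rewrite mulrDl; apply: (opnorm_le' ipP).
    by apply: addr_ge0; apply: mulr_ge0 => //; rewrite invr_ge0 ltW.
  move=> x Nx; apply: (attain ipL ipC ipP ipD) => // y Ny.
  rewrite (re_sum ipL ipC Alin).
  have := nr_q ipL ipC ipP ipD Alin (hq I1) Nx Ny.
  have Niy : N ip ('i%C *: y) = 1 by rewrite (N_i ipL ipC) .
  have := nr_p ipL ipC ipP ipD Alin (hp I2) Nx Niy.
  rewrite !ler_norml => /andP[h1 _] /andP[_ h2]; lra.
Qed.
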